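(* Let $P$ be any finite poset. For $x\in P$ let $C(x)$ be the size of the largest chain containing $x$ and $A(x)$ the size of the largest antichain containing $x$. Then \[ \sum_{x\in P}\frac{1}{A(x)\,C(x)}\le 1. \]
   Context: A chain in a poset is a set of pairwise comparable elements; an antichain is a set of pairwise incomparable elements. *)

(* Defs.v *)
From mathcomp Require Import all_boot all_order all_algebra.
Set Implicit Arguments. Unset Strict Implicit. Unset Printing Implicit Defensive.
Import Order.TTheory GRing.Theory Num.Theory.
Local Open Scope order_scope.

Section PosetDefs.
Context {disp : Order.disp_t} {T : finPOrderType disp}.

Definition is_chain (S : {set T}) : bool :=
  [forall x in S, forall y in S, x >=< y].

Definition is_antichain (S : {set T}) : bool :=
  [forall x in S, forall y in S, (x != y) ==> (x >< y)].

Definition maxchain (x : T) : nat :=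
  \max_(S : {set T} | is_chain S && (x \in S)) #|S|.

Definition maxantichain (x : T) : nat :=
  \max_(S : {set T} | is_antichain S && (x \in S)) #|S|.

End PosetDefs.

(* Main.v *)
Require Import Defs.
From mathcomp Require Import all_boot all_order all_algebra.
From mathcomp Require Import zify ring.
Import Order.TTheory GRing.Theory Num.Theory.
Set Implicit Arguments. Unset Strict Implicit.

Section Proof.
Context (disp : Order.disp_t) (T : finPOrderType disp).
Local Open Scope order_scope.

Lemma chain1 (x : T) : is_chain [set x].
Proof.
apply/forallP=> a; apply/implyP; rewrite in_set1 => /eqP->.
apply/forallP=> b; apply/implyP; rewrite in_set1 => /eqP->.
exact: comparablexx.
Qed.

Lemma antichain1 (x : T) : is_antichain [set x].
Proof.
apply/forallP=> a; apply/implyP; rewrite in_set1 => /eqP->.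
apply/forallP=> b; apply/implyP; rewrite in_set1 => /eqP->.
by rewrite eqxx.
Qed.

Lemma C_ge (S : {set T}) (x : T) : is_chain S -> x \in S -> (#|S| <= maxchain x)%N.
Proof. by move=> cS xS; apply: (leq_bigmax_cond (P := fun S => is_chain S && (x \in S))); rewrite cS xS. Qed.

Lemma A_ge (S : {set T}) (x : T) : is_antichain S -> x \in S -> (#|S| <= maxantichain x)%N.
Proof. by move=> cS xS; apply: (leq_bigmax_cond (P := fun S => is_antichain S && (x \in S))); rewrite cS xS. Qed.

Lemma C_pos (x : T) : (0 < maxchain x)%N.
Proof. by apply: leq_trans _ (C_ge (chain1 x) (set11 x)); rewrite cards1. Qed.

Lemma A_pos (x : T) : (0 < maxantichain x)%N.
Proof. by apply: leq_trans _ (A_ge (antichain1 x) (set11 x)); rewrite cards1. Qed.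

Lemma C_le (x : T) : (maxchain x <= #|T|)%N.
Proof. by apply/bigmax_leqP => S _; apply: max_card. Qed.

Definition L := (#|T|)`!.
Definition W (x : T) := (L %/ maxchain x)%N.

Lemma chain_sum (S : {set T}) : is_chain S -> (\sum_(y in S) W y <= L)%N.
Proof.
move=> cS; have [S0|Sp] := posnP #|S|.
  by rewrite big_pred0 // => y; rewrite (card0_eq S0).
apply: (@leq_trans (\sum_(y in S) (L %/ #|S|))).
  by apply: leq_sum => y yS; apply: leq_div2l => //; apply: C_ge.
by rewrite sum_nat_const mulnC leq_divM.
Qed.

Definition h (x : T) : nat :=
  \max_(S : {set T} | is_chain S && [forall y in S, y <= x] && (x \in S))
     \sum_(y in S) W y.

Lemma h_ge (x : T) : (W x <= h x)%N.
Proof.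
have -> : W x = \sum_(y in [set x]) W y by rewrite big_set1.
apply: (leq_bigmax_cond (P := fun S => is_chain S && [forall y in S, y <= x] && (x \in S))).
rewrite chain1 set11 andbT /=; apply/forallP=> y; apply/implyP.
by rewrite in_set1 => /eqP->.
Qed.

Lemma h_le (x : T) : (h x <= L)%N.
Proof. by apply/bigmax_leqP => S /andP[/andP[cS _] _]; apply: chain_sum. Qed.

Lemma h_lt (x y : T) : x < y -> (h x + W y <= h y)%N.
Proof.
move=> xy.
pose P := fun S : {set T} => is_chain S && [forall z in S, z <= x] && (x \in S).
have : (0 < #|P|)%N.
  apply/card_gt0P; exists [set x]; rewrite /P unfold_in /= chain1 set11 andbT.
  by apply/forallP=> z; apply/implyP; rewrite in_set1 => /eqP->.
case/(eq_bigmax_cond (fun S : {set T} => \sum_(z in S) W z)) => S.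
rewrite unfold_in /P => /andP[/andP[cS /forallP leS] xS] hx.
have yS : y \notin S.
  apply/negP=> yS'; have := leS y; rewrite yS' /= => yx.
  by move: (lt_le_trans xy yx); rewrite ltxx.
have -> : h x = \sum_(z in S) W z by rewrite -hx.
rewrite addnC -(@big_setU1 _ _ _ _ y S W yS).
apply: (leq_bigmax_cond (P := fun S => is_chain S && [forall z in S, z <= y] && (y \in S))).
rewrite setU11 andbT; apply/andP; split.
  apply/forallP=> a; apply/implyP; rewrite in_setU1 => /orP[/eqP->|aS];
  apply/forallP=> b; apply/implyP; rewrite in_setU1 => /orP[/eqP->|bS].
  - by rewrite comparablexx.
  - have := leS b; rewrite bS /= => bx.
    by apply/orP; right; apply: le_trans bx (ltW xy).
  - have := leS a; rewrite aS /= => ax.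
    by apply/orP; left; apply: le_trans ax (ltW xy).
  - by move/forallP: cS => /(_ a); rewrite aS /= => /forallP /(_ b); rewrite bS.
apply/forallP=> z; apply/implyP; rewrite in_setU1 => /orP[/eqP->//|zS].
by have := leS z; rewrite zS /= => zx; apply: le_trans zx (ltW xy).
Qed.

Definition St (t : nat) : {set T} := [set x | (h x - W x <= t)%N && (t < h x)%N].

Lemma St_anti t : is_antichain (St t).
Proof.
apply/forallP=> x; apply/implyP; rewrite inE => /andP[x1 x2].
apply/forallP=> y; apply/implyP; rewrite inE => /andP[y1 y2].
apply/implyP=> nxy; apply/negP=> /orP[] le.
- have xy : x < y by rewrite lt_neqAle nxy le.
  have := h_lt xy; lia.
- have yx : y < x by rewrite lt_neqAle eq_sym nxy le.
  have := h_lt yx; lia.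
Qed.

Local Open Scope ring_scope.

Definition g (x : T) : rat := 1 / (maxantichain x)%:R.

Lemma anti_sum (S : {set T}) : is_antichain S -> \sum_(x in S) g x <= 1.
Proof.
move=> aS; have [S0|Sp] := posnP #|S|.
  by rewrite big_pred0 // => y; rewrite (card0_eq S0).
apply: (@le_trans _ _ (\sum_(x in S) (1 / (#|S|%:R : rat)))).
  apply: ler_sum => x xS; rewrite /g !div1r lef_pV2 ?ler_nat ?A_ge //.
  by rewrite posrE ltr0n A_pos.
  by rewrite posrE ltr0n.
rewrite sumr_const div1r -[_ *+ _]mulr_natl mulfV //.
by rewrite pnatr_eq0 -lt0n.
Qed.

Lemma per_x (x : T) : ((W x)%:R * g x : rat) =
  \sum_(t < L) (if ((h x - W x <= t)%N && (t < h x)%N) then g x else 0).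
Proof.
rewrite -(big_mkord xpredT (fun t => if ((h x - W x <= t)%N && (t < h x)%N) then g x else 0)).
have hl := h_le x; have hw := h_ge x.
rewrite (@big_cat_nat _ _ _ (h x)) //= (@big_cat_nat _ _ _ (h x - W x) 0 (h x)) //=; last lia.
set F := fun t : nat => if ((h x - W x <= t)%N && (t < h x)%N) then g x else 0.
rewrite -/(F _).
have -> : \sum_(0 <= i < h x - W x) F i = 0.
  apply: big1_seq => i; rewrite mem_index_iota /F => /andP[? ?]; case: ifP => // /andP[? ?]; exfalso; lia.
have -> : \sum_(h x <= i < L) F i = 0.
  apply: big1_seq => i; rewrite mem_index_iota /F => /andP[? ?]; case: ifP => // /andP[? ?]; exfalso; lia.
rewrite add0r addr0 (@eq_big_seq _ _ _ _ _ _ (fun _ => g x)); last first.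
  move=> i; rewrite mem_index_iota /F => /andP[? ?]; case: ifP => // /negbT; rewrite negb_and -!ltnNge => /orP[] ?; exfalso; lia.
rewrite sumr_const_nat mulr_natl; congr (_ *+ _); lia.
Qed.

Lemma main_sum : \sum_(x : T) ((W x)%:R * g x) <= L%:R.
Proof.
under eq_bigr do rewrite per_x.
rewrite exchange_big /=.
apply: (@le_trans _ _ (\sum_(t < L) (1 : rat))); last by rewrite sumr_const card_ord.
apply: ler_sum => t _.
rewrite -big_mkcond /=.
apply: le_trans (anti_sum (St_anti t)).
by rewrite le_eqVlt; apply/orP; left; apply/eqP; apply: eq_bigl => y; rewrite /St inE.
Qed.

End Proof.

Local Open Scope ring_scope.

Theorem corollary10 (disp : Order.disp_t) (T : finPOrderType disp) :
  \sum_(x : T) 1 / ((maxantichain x)%:R * (maxchain x)%:R : rat) <= 1.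
Proof.
have Lp : (0 < L T)%N by rewrite fact_gt0.
have E : \sum_(x : T) 1 / ((maxantichain x)%:R * (maxchain x)%:R : rat) =
   (L T)%:R^-1 * \sum_(x : T) ((W x)%:R * g x).
  rewrite mulr_sumr; apply: eq_bigr => x _.
  rewrite /W natf_div; last by apply: dvdn_fact; rewrite C_pos C_le.
  rewrite /g.
  have a0 : (maxantichain x)%:R != 0 :> rat by rewrite pnatr_eq0 -lt0n A_pos.
  have c0 : (maxchain x)%:R != 0 :> rat by rewrite pnatr_eq0 -lt0n C_pos.
  have l0 : (L T)%:R != 0 :> rat by rewrite pnatr_eq0 -lt0n.
  by field; rewrite a0 c0 l0.
rewrite E ler_pdivrMl ?ltr0n // mulr1.
exact: main_sum.
Qed.
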